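(* Let $T$ be a tree with $n\ge 2$ vertices, let $v$ be a vertex of $T$, and let $\ell$ be the length (number of edges) of the longest descending path in the rooted tree $T_v$. Then $$F(T)\leq \left[\sum_{k=0}^{\ell-1}\binom{n-2}{k}\right] F(T_v).$$ In particular, $F(T)\leq 2^{n-2}F(T_v)$.
   Context: For a finite undirected graph $G=(V,E)$, a shelling of $G$ is a total ordering $\sigma(1),\ldots,\sigma(|E|)$ of $E$ such that for every $k$ the edges $\sigma(1),\ldots,\sigma(k)$ form a connected subgraph; $F(G)$ is the number of shellings of $G$. For a vertex $v$ of a tree $T$, $T_v$ denotes $T$ rooted at $v$; a shelling of $T_v$ is a shelling $\sigma$ of $T$ whose first edge $\sigma(1)$ is incident to $v$, and $F(T_v)$ is the number of such shellings. In $T_v$, $u$ is the parent of $w$ (and $w$ a child of $u$) if $(u,w)$ is an edge and $u$ is closer to $v$ than $w$; a descending path from $u$ to $w$ is a path $u - v_1 - \cdots - v_r - w$ in which each vertex is the parent of the next. *)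

(* Defs.v *)
From mathcomp Require Import all_boot.
Set Implicit Arguments. Unset Strict Implicit. Unset Printing Implicit Defensive.

Section Graphs.
Variable V : finType.
Implicit Types (e : rel V) (S : seq {set V}).

Definition simple_graph e : Prop := symmetric e /\ irreflexive e.

Definition edges e : {set {set V}} :=
  [set E : {set V} | [exists x, [exists y, e x y && (E == [set x; y])]]].

(* a tree: connected and without cycles (a cycle = closed path with >= 3
   distinct vertices) *)
Definition is_tree e : Prop :=
  (forall x y, connect e x y) /\ (forall c : seq V, ~~ (ucycleb e c && (2 < size c))).

(* the subgraph formed by the edge list S (vertices = endpoints of edges of S)
   is connected: any two vertices covered by S are joined through edges of S *)
Definition edge_adj S : rel V := fun a b => has (fun E : {set V} => (a \in E) && (b \in E)) S.
Definition covered S : pred V := fun x => has (fun E : {set V} => x \in E) S.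
Definition connected_edges S : bool :=
  [forall x, [forall y, (covered S x && covered S y) ==> connect (edge_adj S) x y]].

Definition is_shelling e (t : seq {set V}) : bool :=
  perm_eq t (enum (edges e)) &&
  [forall k : 'I_(size t).+1, connected_edges (take k t)].

Definition F e : nat :=
  #|[pred t : (#|edges e|).-tuple {set V} | is_shelling e t]|.

(* F(T_v): number of shellings whose first edge is incident to v *)
Definition F_rooted e (v : V) : nat :=
  #|[pred t : (#|edges e|).-tuple {set V} | is_shelling e t && (v \in head set0 t)]|.

Definition dist e (x y : V) : nat :=
  find (fun k => [exists p : k.-tuple V, path e x p && (last x p == y)])
       (iota 0 #|V|).

Definition parent e (v u w : V) : bool := e u w && (dist e v u < dist e v w).

(* u :: p is a descending path in T_v; its length is size p *)
Definition descending e (v u : V) (p : seq V) : bool := path (parent e v) u p.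

Definition longest_desc e (v : V) (l : nat) : Prop :=
  (exists u p, descending e v u p /\ size p = l) /\
  (forall u p, descending e v u p -> size p <= l).

End Graphs.

(* Main.v *)
Require Import Defs.
From mathcomp Require Import all_boot.
From mathcomp Require Import zify.
Set Implicit Arguments. Unset Strict Implicit. Unset Printing Implicit Defensive.


Section Tree.
Variables (V : finType) (e : rel V).
Hypothesis esym : symmetric e.
Hypothesis acyc : forall c : seq V, ~~ (ucycleb e c && (2 < size c)).

Lemma no_fork x r s : path e x r -> path e x s -> uniq (x :: r) -> uniq (x :: s) ->
  has (mem s) r -> head x r != head x s -> False.
Proof.
move=> pr ps ur us hs; move: pr ur.
case: (split_find hs) => z r1 r2 zs hr1 pr ur.
move: ps us hr1; case/splitPr: zs => s1 s2 ps us hr1 hd.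
apply: (negP (acyc (x :: rcons r1 z ++ rev s1))).
apply/andP; split; last first.
  rewrite /= size_cat size_rcons size_rev.
  case: r1 s1 hd {pr ur hr1 ps us} => [|? ?] [|? ?] //=; by rewrite eqxx.
apply/andP; split.
  rewrite /= rcons_cat cat_path last_rcons.
  move: pr; rewrite cat_path => /andP[-> _] /=.
  have := rev_path e x (rcons s1 z).
  rewrite last_rcons belast_rcons rev_cons => ->.
  have -> : path (fun a b => e b a) x (rcons s1 z) = path e x (rcons s1 z).
    by apply: eq_path => a b; rewrite esym.
  by move: ps; rewrite -cat_rcons cat_path => /andP[].
move: ur us hr1; rewrite /= !mem_cat !cat_uniq !mem_rcons !rcons_uniq !in_cons
  rev_uniq mem_rev !negb_or.
move=> /and4P[/andP[/andP[xz xr1] _] /andP[zr1 ur1] _ _].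
move=> /and4P[/and3P[xs1 _ _] us1 /andP[zs1 _] _] hr1.
rewrite xz xr1 xs1 ur1 us1 zr1 /= andbT.
apply/hasPn => y; rewrite mem_rev => ys1; rewrite mem_rcons in_cons negb_or.
apply/andP; split; first by apply: contraNneq zs1 => <-.
move/hasPn: hr1 => h; apply/negP => yr1; have := h y yr1; rewrite /= mem_cat ys1; done.
Qed.
Lemma path_unique x p q : path e x p -> path e x q -> uniq (x :: p) ->
  uniq (x :: q) -> last x p = last x q -> p = q.
Proof.
elim: p x q => [|a p IH] x [|b q] //=.
- move=> _ _ _ /andP[xq _] ex; by move: xq; rewrite ex mem_last.
- move=> _ _ /andP[xp _] _ ex; by move: xp; rewrite -ex mem_last.
move=> /andP[xa pa] /andP[xb qb] /andP[xap up] /andP[xbq uq] hl.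
case: (eqVneq a b) => [eab|nab].
  rewrite -eab in qb uq hl *; by rewrite (IH a q).
have hs : has (mem (b :: q)) (a :: p).
  apply/hasP; exists (last a p); first exact: mem_last.
  rewrite hl; exact: mem_last.
exfalso; apply: (@no_fork x (a :: p) (b :: q) _ _ _ _ hs) => /=.

- by rewrite xa.
- by rewrite xb.
- by rewrite xap.
- by rewrite xbq.
- done.
Qed.

Lemma find_iota_min (P : pred nat) n k : k < n -> P k -> (forall j, P j -> k <= j) ->
  find P (iota 0 n) = k.
Proof.
move=> kn Pk hmin.
have h : has P (iota 0 n) by apply/hasP; exists k; rewrite // mem_iota.
have fn : find P (iota 0 n) < n by rewrite -[n in _ < n](size_iota 0 n) -has_find.
apply/eqP; rewrite eqn_leq; apply/andP; split.
  rewrite leqNgt; apply/negP => kf.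
  by have := before_find 0 kf; rewrite nth_iota // add0n Pk.
apply: hmin; have := nth_find 0 h; by rewrite nth_iota // add0n.
Qed.

Lemma dist_path v ys : path e v ys -> uniq (v :: ys) -> dist e v (last v ys) = size ys.
Proof.
move=> pys uys; rewrite /dist; apply: find_iota_min.
- have := max_card (mem (v :: ys)); rewrite (card_uniqP _) //.
- by apply/existsP; exists (in_tuple ys); rewrite /= pys eqxx.
move=> j /existsP[p /andP[pp /eqP lp]].
move: lp; case: (shortenP pp) => p' pp' up' sub' lp.
have ep : p' = ys := path_unique pp' pys up' uys lp.
rewrite -ep -(size_tuple p); apply: uniq_leq_size => //.
by case/andP: up'.
Qed.

Lemma last_take_nth (T : Type) (x : T) s i : i <= size s -> last x (take i s) = nth x (x :: s) i.
Proof.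
elim: s x i => [|a s IH] x [|i] //= hi.
by rewrite IH // (set_nth_default x a).
Qed.

Lemma uniq_path_desc v ys : path e v ys -> uniq (v :: ys) -> descending e v v ys.
Proof.
move=> pys uys; rewrite /descending; apply/(pathP v) => i hi.
have pe := (pathP v pys i hi).
rewrite /parent pe /=.
have h j : j <= size ys -> dist e v (nth v (v :: ys) j) = j.
  move=> hj; rewrite -last_take_nth // dist_path ?size_takel //.
    exact: take_path.
  by rewrite -/(take j.+1 (v :: ys)); apply: take_uniq.
rewrite h ?(ltnW hi) //.
have -> : nth v ys i = nth v (v :: ys) i.+1 by [].
by rewrite h.
Qed.
End Tree.


Section Conn.
Variable V : finType.
Implicit Types (S A B : seq {set V}).

Lemma connP S : connected_edges S ->
  forall x y, covered S x -> covered S y -> connect (edge_adj S) x y.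
Proof.
move=> /forallP h x y hx hy; have /forallP h2 := h x.
by have /implyP := h2 y; apply; rewrite hx hy.
Qed.

Lemma connI S : (forall x y, covered S x -> covered S y -> connect (edge_adj S) x y) ->
  connected_edges S.
Proof.
move=> h; apply/forallP => x; apply/forallP => y; apply/implyP => /andP[hx hy].
exact: h.
Qed.

Lemma covered_mem S A x : S =i A -> covered S x = covered A x.
Proof. by move=> h; rewrite /covered (eq_has_r h). Qed.

Lemma conn_mem S A : S =i A -> connected_edges S = connected_edges A.
Proof.
move=> h; apply/idP/idP => c; apply: connI => x y hx hy.
- rewrite -(covered_mem x h) in hx; rewrite -(covered_mem y h) in hy.
  have := connP c hx hy.
  by rewrite (eq_connect (e' := edge_adj A)) // => a b; rewrite /edge_adj (eq_has_r h).
- rewrite (covered_mem x h) in hx; rewrite (covered_mem y h) in hy.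
  have := connP c hx hy.
  by rewrite (eq_connect (e' := edge_adj S)) // => a b; rewrite /edge_adj (eq_has_r h).
Qed.

Lemma conn_nil : @connected_edges V [::].
Proof. by apply: connI. Qed.

Lemma conn1 (E : {set V}) : connected_edges [:: E].
Proof.
apply: connI => x y; rewrite /covered /= !orbF => hx hy.
by apply: connect1; rewrite /edge_adj /= hx hy.
Qed.

Lemma edge_adj_sym S : symmetric (edge_adj S).
Proof. by move=> x y; rewrite /edge_adj; apply: eq_has => E; rewrite andbC. Qed.

Lemma connect_catl A B x y : connect (edge_adj A) x y -> connect (edge_adj (A ++ B)) x y.
Proof.
apply: connect_sub => a b h; apply: connect1; by rewrite /edge_adj has_cat -/(edge_adj A a b) h.
Qed.

Lemma connect_catr A B x y : connect (edge_adj B) x y -> connect (edge_adj (A ++ B)) x y.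
Proof.
apply: connect_sub => a b h; apply: connect1; by rewrite /edge_adj has_cat -/(edge_adj B a b) h orbT.
Qed.

Lemma conn_cat A B z : connected_edges A -> connected_edges B ->
  covered A z -> covered B z -> connected_edges (A ++ B).
Proof.
move=> cA cB zA zB.
have hz a : covered (A ++ B) a -> connect (edge_adj (A ++ B)) z a.
  rewrite /covered has_cat => /orP[ha|hb].
    by apply: connect_catl; apply: (connP cA).
  by apply: connect_catr; apply: (connP cB).
apply: connI => x y hx hy; apply: connect_trans (hz _ hy).
by rewrite (sym_connect_sym (@edge_adj_sym _)); apply: hz.
Qed.

End Conn.


Lemma mask_set_nth (T : Type) (M : bitseq) (s : seq T) p x0 :
  p < size s -> size M = size s -> (forall i, p <= i -> nth false M i = false) ->
  mask (set_nth false M p true) s = rcons (mask M s) (nth x0 s p).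
Proof.
elim: s M p => [|x s IH] [|b M] p //= hp [hM] hf.
case: p hp hf => [|p] hp hf /=.
  have hb : b = false by have := hf 0 (leqnn 0).
  have -> : M = nseq (size M) false.
    apply: (@eq_from_nth _ false); rewrite ?size_nseq // => i hi.
    by rewrite nth_nseq hi; apply: (hf i.+1).
  by rewrite hb !mask_false.
rewrite IH //; last by move=> i hi; apply: (hf i.+1).
by case: b {hf}.
Qed.

Lemma perm_mask (T : eqType) (M : bitseq) (s : seq T) : size M = size s ->
  perm_eq (mask M s ++ mask (map negb M) s) s.
Proof.
elim: s M => [|x s IH] [|b M] //= [hM].
case: b => /=.
  by rewrite perm_cons IH.
by rewrite -cat1s perm_catCA /= perm_cons IH.
Qed.

Lemma mask_inj (T : Type) (M : bitseq) (s1 s2 : seq T) :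
  size M = size s1 -> size M = size s2 -> mask M s1 = mask M s2 ->
  mask (map negb M) s1 = mask (map negb M) s2 -> s1 = s2.
Proof.
elim: M s1 s2 => [|b M IH] [|x1 s1] [|x2 s2] //= [h1] [h2].
case: b => /=.
  by case=> -> h h'; rewrite (IH s1 s2).
by move=> h [-> h']; rewrite (IH s1 s2).
Qed.

Lemma mask_take_sub (T : eqType) (M : bitseq) (s : seq T) j :
  size M = size s -> exists q,
  {subset take j (mask (map negb M) s) <= take q s} /\
  {subset take q s <= mask M s ++ take j (mask (map negb M) s)}.
Proof.
elim: s M j => [|x s IH] [|b M] j //=.

move=> [hM].
case: j => [|j].
  by exists 0; split => y; rewrite !take0.
case: b => /=.
  have [q [h1 h2]] := IH M j.+1 hM.
  exists q.+1; split => y /=.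
    by move=> /h1 hy; rewrite in_cons hy orbT.
  rewrite in_cons => /orP[/eqP ->|/h2]; first by rewrite in_cons eqxx.
  by rewrite in_cons => ->; rewrite orbT.
have [q [h1 h2]] := IH M j hM.
exists q.+1; split => y /=.
  by rewrite !in_cons => /orP[->//|/h1 ->]; rewrite orbT.
rewrite in_cons => /orP[/eqP ->|/h2]; first by rewrite mem_cat in_cons eqxx orbT.
by rewrite !mem_cat in_cons => /orP[->|->]; rewrite ?orbT.
Qed.


Section Chain.
Variables (V : finType) (e : rel V).
Hypothesis esym : symmetric e.
Hypothesis eirr : irreflexive e.
Variable s : seq {set V}.
Hypothesis hconn : forall k, connected_edges (take k s).
Hypothesis hedge : forall E, E \in s -> exists x y, e x y /\ E = [set x; y].

Lemma covered_take i j z : i <= j -> covered (take i s) z -> covered (take j s) z.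
Proof.
move=> ij; rewrite -(take_takel s ij) /covered => h.
by rewrite -(cat_take_drop i (take j s)) has_cat h.
Qed.

Lemma other E u : E \in s -> u \in E -> exists w, e u w /\ E = [set u; w].
Proof.
move=> /hedge [x [y [exy ->]]] /set2P [->|->].
  by exists y.
by exists x; rewrite esym setUC.
Qed.

Definition chain_ok (p : nat) (u : V) (M : bitseq) (ys : seq V) : Prop :=
  size M = size s /\ nth false M 0 /\ (forall i, p < i -> nth false M i = false) /\
  path e u ys /\ uniq (u :: ys) /\ size ys = count id M /\
  all (covered (take p.+1 s)) (u :: ys) /\
  (forall k, connected_edges (take k (rev (mask M s)))) /\ u \in last set0 (mask M s).

Lemma chain p u : p < size s -> u \in nth set0 s p -> ~~ covered (take p s) u ->
  exists M ys, chain_ok p u M ys.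
Proof.
elim/ltn_ind: p u => p IH u hp hu hnc.
have Es : nth set0 s p \in s := mem_nth set0 hp.
have [w [euw hE]] := other Es hu.
set E := nth set0 s p in Es hu hE *.
have uw : u != w by apply: contraTneq euw => ->; rewrite eirr.
have wE : w \in E by rewrite hE set22.
have tk : take p.+1 s = rcons (take p s) E := take_nth set0 hp.
suff [M' [ys' [hsz [hb [hpath [huq [hcnt [hcov [hg [hcn hlast]]]]]]]]]] : exists M' ys',
  size M' = size s /\ (forall i, p <= i -> nth false M' i = false) /\ path e w ys' /\
  uniq (w :: ys') /\ size ys' = count id M' /\ all (covered (take p s)) ys' /\
  (p = 0 \/ nth false M' 0) /\
  ((forall k, connected_edges (take k (rev (mask M' s)))) /\
   (mask M' s = [::] \/ w \in last set0 (mask M' s))).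
  exists (set_nth false M' p true), (w :: ys'); rewrite /chain_ok.
  have hmask : mask (set_nth false M' p true) s = rcons (mask M' s) E.
    exact: mask_set_nth.
  rewrite hmask last_rcons hu.
  split; first by rewrite size_set_nth hsz; apply/maxn_idPr.
  split.
    rewrite nth_set_nth /=; case: (eqVneq 0 p) => [//|p0].
    by case: hg => // p00; rewrite p00 eqxx in p0.
  split; first by move=> i hi; rewrite nth_set_nth /= (gtn_eqF hi) hb // ltnW.
  split; first by rewrite /= euw.
  have uys : u \notin ys'.
    apply/negP => uy; have := allP hcov u uy; by rewrite (negbTE hnc).
  split; first by rewrite /= in_cons negb_or uw uys.
  split; first by rewrite count_set_nthF // hb // /= hcnt addn1 subn0.
  split.
    rewrite /= tk /covered has_rcons hu /=; apply/andP; split; first by rewrite has_rcons wE.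
    apply/allP => y yys.
    rewrite has_rcons; apply/orP; right; exact: (allP hcov y yys).
  split => // k; rewrite rev_rcons; case: k => [|k]; first exact: conn_nil.
  rewrite /= -cat1s.
  case: hlast => [->|wl]; first by rewrite /=; exact: conn1.
  move: (hcn k) wl; case/lastP: (mask M' s) => [|R z] hcnk; first by rewrite in_set0.
  rewrite last_rcons rev_rcons => wz.
  case: k hcnk => [|k] hcnk; first by rewrite take0; exact: conn1.
  rewrite rev_rcons in hcnk.
  apply: (conn_cat (z := w) (conn1 E) hcnk); first by rewrite /covered /= wE.
  by rewrite /covered /= wz.
case: (posnP p) => [p0|ppos].
  exists (nseq (size s) false), [::].
  split; first by rewrite size_nseq.
  split; first by move=> i _; rewrite nth_nseq if_same.
  split => //.
  split => //.
  split; first by rewrite count_nseq mul0n.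
  split => //.
  split; first by left.
  rewrite mask_false; split; last by left.
  move=> k; have -> : take k (rev [::]) = [::] :> seq {set V} by case: k.
  exact: conn_nil.
have wcov : covered (take p s) w.
  apply: contraT => wnc.
  have c := hconn p.+1; rewrite tk in c.
  have E0s : nth set0 s 0 \in take p s.
    rewrite -(nth_take set0 ppos); apply: mem_nth; by rewrite size_take hp.
  have [a [b [eab hE0]]] := hedge (mem_take E0s).
  have acov : covered (take p s) a.
    by apply/hasP; exists (nth set0 s 0) => //; rewrite hE0 set21.
  have nE z : covered (take p s) z -> (z \in E) = false.
    move=> zc; apply/negP; rewrite hE => /set2P[zu|zw].
      by rewrite zu (negbTE hnc) in zc.
    by rewrite zw (negbTE wnc) in zc.
  have hcl : closed (edge_adj (rcons (take p s) E)) E.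
    move=> z1 z2; rewrite /edge_adj has_rcons.
    case/orP => [/andP[-> ->] //|/hasP[F Fin /andP[z1F z2F]]].
    by rewrite !nE //; apply/hasP; exists F.
  have uc : covered (rcons (take p s) E) u by rewrite /covered has_rcons hu.
  have ac : covered (rcons (take p s) E) a.
    by rewrite /covered has_rcons; apply/orP; right; exact: acov.
  have := closed_connect hcl (connP c uc ac).
  by rewrite hu nE.
set p' := find (fun F : {set V} => w \in F) s.
have hs : has (fun F : {set V} => w \in F) s.
  by rewrite -(cat_take_drop p s) has_cat; apply/orP; left; exact: wcov.
have p'p : p' < p := find_ltn wcov.
have hw : w \in nth set0 s p' := nth_find set0 hs.
have hnc' : ~~ covered (take p' s) w by rewrite /covered has_take // ltnn.
have [M' [ys' [a1 [a2 [a3 [a4 [a5 [a6 [a7 [a8 a9]]]]]]]]]] :=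
  IH p' p'p w (ltn_trans p'p hp) hw hnc'.
exists M', ys'.
split => //.
split; first by move=> i hi; apply: a3; apply: leq_trans hi.
split => //.
split => //.
split => //.
split.
  apply/allP => y yy; apply: (covered_take p'p).
  by move/andP: a7 => [_ /allP]; apply.
split; first by right.
by split => //; right.
Qed.

Lemma adj_path_e (A : seq {set V}) x q : {in A, forall E, exists a b, e a b /\ E = [set a; b]} ->
  path (edge_adj A) x q -> uniq (x :: q) -> path e x q.
Proof.
move=> hA; elim: q x => [|a q IH] x //= /andP[hxa pq] /andP[xaq uq].
rewrite IH // andbT.
have xa : x != a by apply: contraNneq xaq => ->; rewrite in_cons eqxx.
case/hasP: hxa => F FA /andP[xF aF].
have [c [d [ecd hF]]] := hA F FA.
move: xa; rewrite hF in xF aF; case/set2P: xF => ->; case/set2P: aF => -> //;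
  rewrite ?eqxx // => _; by rewrite esym.
Qed.

Hypothesis acyc : forall c : seq V, ~~ (ucycleb e c && (2 < size c)).
Hypothesis suniq : uniq s.

Lemma new_vertex p : 0 < p -> p < size s ->
  exists2 z, z \in nth set0 s p & ~~ covered (take p s) z.
Proof.
move=> ppos hp.
have Es : nth set0 s p \in s := mem_nth set0 hp.
have [x [y [exy hE]]] := hedge Es.
case hx : (covered (take p s) x); last by exists x; rewrite ?hx // hE set21.
case hy : (covered (take p s) y); last by exists y; rewrite ?hy // hE set22.
exfalso.
have xy : x != y by apply: contraTneq exy => ->; rewrite eirr.
have := connP (hconn p) hx hy => /connectP[q pq ly].
move: ly; case: (shortenP pq) => q' pq' uq' _ ly.
have hA : {in take p s, forall E, exists a b, e a b /\ E = [set a; b]}.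
  by move=> E /mem_take; apply: hedge.
have pe := adj_path_e hA pq' uq'.
have exy' : path e x [:: y] by rewrite /= exy.
have uxy : uniq [:: x; y] by rewrite /= in_cons orbF xy.
have qy : q' = [:: y] := path_unique esym acyc pe exy' uq' uxy (Logic.eq_sym ly).
move: pq'; rewrite qy /= andbT => /hasP[F FA /andP[xF yF]].
have [c [d [ecd hF]]] := hA F FA.
have FE : F = nth set0 s p.
  rewrite hE hF; move: xy; rewrite hF in xF yF.
  case/set2P: xF => ->; case/set2P: yF => -> //; rewrite ?eqxx // => _; exact: setUC.
move: FA; rewrite FE in_take // index_uniq //.
by rewrite ltnn.
Qed.


Lemma covered_nth p z : p < size s -> z \in nth set0 s p -> covered (take p.+1 s) z.
Proof.
by move=> hp hz; rewrite (take_nth set0 hp) /covered has_rcons hz.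
Qed.

Lemma edge_bound : 0 < size s -> (size s).+1 <= #|V|.
Proof.
move=> s0.
have [a [b [eab hE0]]] := hedge (mem_nth set0 s0).
pose nv p := odflt a [pick z | (z \in nth set0 s p) && ~~ covered (take p s) z].
have nvP p : 0 < p -> p < size s -> nv p \in nth set0 s p /\ ~~ covered (take p s) (nv p).
  move=> p0 hp; rewrite /nv; case: pickP => [z /andP[h1 h2] //|none].
  have [z h1 h2] := new_vertex p0 hp.
  by have := none z; rewrite h1 h2.
have ab : a != b by apply: contraTneq eab => ->; rewrite eirr.
have c1 z : z \in nth set0 s 0 -> forall p, 0 < p -> covered (take p s) z.
  by move=> hz p p0; apply: (covered_take p0); apply: covered_nth.
have hin p : p \in iota 1 (size s).-1 -> 0 < p /\ p < size s.
  by rewrite mem_iota => /andP[-> h]; split => //; move: h; rewrite add1n prednK.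
have notin z : z \in nth set0 s 0 -> z \notin [seq nv p | p <- iota 1 (size s).-1].
  move=> hz; apply/mapP => [[p hp ep]].
  have [p0 hps] := hin p hp.
  have := (nvP p p0 hps).2; by rewrite -ep c1.
have u : uniq (a :: b :: [seq nv p | p <- iota 1 (size s).-1]).
  have na : a \notin [seq nv p | p <- iota 1 (size s).-1].
    by apply: notin; rewrite hE0 set21.
  have nb : b \notin [seq nv p | p <- iota 1 (size s).-1].
    by apply: notin; rewrite hE0 set22.
  rewrite /= in_cons negb_or ab na nb /=.
  rewrite map_inj_in_uniq ?iota_uniq // => p q hp hq epq.
  have [p0 hps] := hin p hp; have [q0 hqs] := hin q hq.
  case: (ltngtP p q) => // pq; exfalso.
  - have := (nvP q q0 hqs).2; rewrite -epq.
    by rewrite (covered_take pq (covered_nth hps (nvP p p0 hps).1)).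
  - have := (nvP p p0 hps).2; rewrite epq.
    by rewrite (covered_take pq (covered_nth hqs (nvP q q0 hqs).1)).
have := max_card (mem (a :: b :: [seq nv p | p <- iota 1 (size s).-1])).
by rewrite (card_uniqP u) /= size_map size_iota prednK.
Qed.

End Chain.


Lemma card_nth_set m (b : bitseq) : size b <= m ->
  #|[set i : 'I_m | nth false b i]| = count id b.
Proof.
rewrite -sum1dep_card big_mkcond /=.
elim: b m => [|x b IH] m hb.
  by rewrite big1 // => i _; rewrite nth_nil.
case: m hb => [|m] //= hb.
rewrite big_ord_recl /= IH //.
Qed.

Lemma mask_head (T : eqType) (M : bitseq) (t : seq T) x0 :
  size M = size t -> nth false M 0 -> nth x0 t 0 \in mask M t.
Proof. by case: M => [|b M]; case: t => [|x t] //= _ ->; rewrite mem_head. Qed.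

Section Shell.
Variables (V : finType) (e : rel V).

Lemma shell_facts t : is_shelling e t ->
  [/\ forall k, connected_edges (take k t),
      forall E, E \in t -> exists x y, e x y /\ E = [set x; y],
      uniq t & size t = #|edges e|].
Proof.
case/andP => hp /forallP hc; split.
- move=> k; case: (leqP k (size t)) => hk.
    by have := hc (Ordinal (n := (size t).+1) (m := k) hk).
  rewrite take_oversize ?(ltnW hk) //.
  by have := hc (Ordinal (n := (size t).+1) (m := size t) (leqnn _)); rewrite /= take_size.
- move=> E; rewrite (perm_mem hp) mem_enum inE => /existsP[x /existsP[y /andP[exy /eqP ->]]].
  by exists x, y.
- by rewrite (perm_uniq hp) enum_uniq.
- by rewrite (perm_size hp) cardE.
Qed.

Definition tau (M : bitseq) (t : seq {set V}) := rev (mask M t) ++ mask (map negb M) t.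

Lemma tau_shelling (v : V) t M : is_shelling e t -> size M = size t -> nth false M 0 ->
  (forall k, connected_edges (take k (rev (mask M t)))) -> v \in last set0 (mask M t) ->
  is_shelling e (tau M t) && (v \in head set0 (tau M t)).
Proof.
move=> sh hM hM0 hc hv.
have [hconn hedge _ _] := shell_facts sh.
case/andP: (sh) => hperm _.
have hne : mask M t != [::].
  apply: contraTneq hv => ->; by rewrite in_set0.
apply/andP; split; last first.
  rewrite /tau; move: hv hne; case/lastP: (mask M t) => [|C z] //.
  by rewrite last_rcons rev_rcons.
apply/andP; split.
  rewrite /tau; apply: perm_trans hperm.
  apply: perm_trans (perm_mask hM); by rewrite perm_cat2r perm_rev.
apply/forallP => k; rewrite /tau take_cat size_rev.
case: ifP => hk; first exact: hc.
set j := k - _.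
have [q [h1 h2]] := mask_take_sub j hM.
rewrite (@conn_mem _ _ (rev (mask M t) ++ take q t)); last first.
  move=> y; rewrite !mem_cat mem_rev; apply/idP/idP => /orP[->//|hy].
    by rewrite (h1 _ hy) orbT.
  by move: (h2 _ hy); rewrite mem_cat.
case: q {h1 h2} => [|q].
  by rewrite take0 cats0 -(take_size (rev _)); exact: hc.
have t0 : 0 < size t by rewrite -hM; case: (M) hM0.
have [a [b [eab hE0]]] := hedge _ (mem_nth set0 t0).
apply: (@conn_cat _ _ _ a).
- by rewrite -(take_size (rev _)); exact: hc.
- exact: hconn.
- rewrite /covered has_rev; apply/hasP; exists (nth set0 t 0); last by rewrite hE0 set21.
  exact: mask_head.
- apply/hasP; exists (nth set0 t 0); last by rewrite hE0 set21.
  rewrite -(nth_take set0 (ltn0Sn q)); apply: mem_nth.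
  by rewrite size_take; case: ifP.
Qed.

End Shell.


Lemma card_small (T : finType) l :
  #|[set S : {set T} | #|S| < l]| = \sum_(k < l) 'C(#|T|, k).
Proof.
elim: l => [|l IH].
  by rewrite big_ord0; apply/eqP; rewrite cards_eq0; apply/eqP/setP => S; rewrite !inE.
rewrite big_ord_recr /= -IH -card_draws -!sum1dep_card.
rewrite (bigID (fun S : {set T} => #|S| == l)) /= addnC; congr (_ + _).
  apply: eq_bigl => S /=; rewrite ltnS leq_eqVlt.
  by case: (eqVneq #|S| l) => [->|]; rewrite ?ltnn ?andbT ?andbF.
apply: eq_bigl => S /=; rewrite ltnS leq_eqVlt.
by case: (eqVneq #|S| l) => [->|]; rewrite ?ltnn ?andbT ?andbF.
Qed.

Lemma card_small_le (T : finType) l : #|[set S : {set T} | #|S| < l]| <= 2 ^ #|T|.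
Proof.
rewrite -cardsT -card_powerset; apply: subset_leq_card; apply/subsetP => S _.
by rewrite powersetE subsetT.
Qed.

Section Main.
Variables (V : finType) (e : rel V) (v : V) (l : nat).
Hypothesis esym : symmetric e.
Hypothesis eirr : irreflexive e.
Hypothesis hcG : forall x y, connect e x y.
Hypothesis acyc : forall c : seq V, ~~ (ucycleb e c && (2 < size c)).
Hypothesis n2 : 2 <= #|V|.
Hypothesis hl : longest_desc e v l.

Lemma v_edge : exists w, e v w.
Proof.
have : 0 < #|predC1 v| by rewrite cardC1; lia.
case/card_gt0P => y; rewrite !inE => yv.
case/connectP: (hcG v y) => [[|w p]] /=; first by move=> _ yv'; rewrite yv' eqxx in yv.
by case/andP => evw _ _; exists w.
Qed.

Lemma key t : is_shelling e t -> exists M, [/\ size M = size t, nth false M 0,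
  count id M <= l & is_shelling e (tau M t) && (v \in head set0 (tau M t))].
Proof.
move=> sh; have [hconn hedge hu hsz] := shell_facts sh.
have [w evw] := v_edge.
have vwt : [set v; w] \in t.
  case/andP: sh => hp _; rewrite (perm_mem hp) mem_enum inE.
  by apply/existsP; exists v; apply/existsP; exists w; rewrite evw eqxx.
have hast : has (fun E : {set V} => v \in E) t by apply/hasP; exists [set v; w]; rewrite ?set21.
have hp : find (fun E : {set V} => v \in E) t < size t by rewrite -has_find.
have hv : v \in nth set0 t (find (fun E : {set V} => v \in E) t) := nth_find set0 hast.
have hnc : ~~ covered (take (find (fun E : {set V} => v \in E) t) t) v.
  by rewrite /covered has_take // ltnn.
have [M [ys [a1 [a2 [a3 [a4 [a5 [a6 [a7 [a8 a9]]]]]]]]]] := chain esym eirr hconn hedge hp hv hnc.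
exists M; split => //.
  rewrite -a6; apply: hl.2; exact: uniq_path_desc.
exact: tau_shelling.
Qed.

Lemma main : F e <= #|[set S : {set 'I_(#|V| - 2)} | #|S| < l]| * F_rooted e v.
Proof.
case: (posnP (F e)) => [->//|Fpos].
set N := #|edges e|.
have [t0 sh0] := card_gt0P Fpos.
have [hc0 he0 hu0 hsz0] := shell_facts sh0.
move: hsz0; rewrite -/N => hsz0.
have [w evw] := v_edge.
have N0 : 0 < N.
  rewrite -hsz0; case/andP: sh0 => hp _.
  have : [set v; w] \in enum (edges e).
    by rewrite mem_enum inE; apply/existsP; exists v; apply/existsP; exists w; rewrite evw eqxx.
  by rewrite -(perm_mem hp); case: (tval t0).
have NB : N.+1 <= #|V|.
  by rewrite -hsz0; apply: (edge_bound esym eirr hc0 he0 acyc hu0); rewrite hsz0.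
pose MofS (S : {set 'I_(#|V| - 2)}) :=
  true :: take N.-1 [seq i \in S | i <- enum 'I_(#|V| - 2)].
have szM S : size (MofS S) = N.
  rewrite /= size_take size_map size_enum_ord.
  rewrite -subn1; case: ltnP => h.
  by rewrite subn1 prednK.
  move: N0 NB h; clear; move: (#|V|) N => a b; lia.
pose good (t : N.-tuple {set V}) (S : {set 'I_(#|V| - 2)}) :=
  [&& #|S| < l, is_shelling e (tau (MofS S) t) & v \in head set0 (tau (MofS S) t)].
have exS (t : N.-tuple {set V}) : is_shelling e t -> exists S, good t S.
  move=> sh; have [M [hM hM0 hcnt hsh]] := key sh.
  case: M hM hM0 hcnt hsh => [|b M'] //= hM -> hcnt hsh.
  exists [set i : 'I_(#|V| - 2) | nth false M' i].
  have eM : MofS [set i : 'I_(#|V| - 2) | nth false M' i] = true :: M'.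
    apply: (@eq_from_nth _ false); first by rewrite szM /= hM size_tuple.
    move=> [|i] //; rewrite szM => hi /=.
    have hi' : i < N.-1 by lia.
    have hi2 : i < #|V| - 2 by lia.
    rewrite nth_take // (nth_map (Ordinal hi2)) ?size_enum_ord // inE.
    by rewrite nth_enum_ord.
  rewrite /good eM hsh andbT card_nth_set //.
  move: hM; rewrite size_tuple => hM; lia.
pose f (t : N.-tuple {set V}) : N.-tuple {set V} * {set 'I_(#|V| - 2)} :=
  if [pick X | good t X] is Some X then (insubd t (tau (MofS X) t), X) else (t, set0).
have fP (t : N.-tuple {set V}) : is_shelling e t ->
    exists S, f t = (insubd t (tau (MofS S) t), S) /\ good t S.
  move=> sh; rewrite /f; case: pickP => [S gS|none]; first by exists S.
  by have [S gS] := exS t sh; have := none S; rewrite gS.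
have szt (t : N.-tuple {set V}) S : good t S -> size (tau (MofS S) t) == N.
  by case/and3P => _ sh _; have [_ _ _ ->] := shell_facts sh.
pose B := setX [set t : N.-tuple {set V} | is_shelling e t && (v \in head set0 t)]
               [set S : {set 'I_(#|V| - 2)} | #|S| < l].
have -> : F e = #|[set f t | t in [pred t : N.-tuple {set V} | is_shelling e t]]|.
  rewrite card_in_imset //.
  move=> t1 t2 sh1 sh2 /=.
  have [S1 [-> g1]] := fP t1 sh1; have [S2 [-> g2]] := fP t2 sh2.
  case=> ei eS; subst S2.
  have := congr1 val ei; rewrite !val_insubd (szt _ _ g1) (szt _ _ g2) /tau => eq.
  set M := MofS S1 in eq.
  have sM1 : size M = size t1 by rewrite szM size_tuple.
  have sM2 : size M = size t2 by rewrite szM size_tuple.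
  have e1 : mask M t1 = mask M t2.
    have := congr1 (take (count id M)) eq.
    rewrite !take_size_cat ?size_rev ?size_mask //.
    by move/(congr1 rev); rewrite !revK.
  have e2 : mask (map negb M) t1 = mask (map negb M) t2.
    have := congr1 (drop (count id M)) eq.
    by rewrite !drop_size_cat ?size_rev ?size_mask.
  by apply: val_inj; apply: (mask_inj sM1 sM2).
rewrite mulnC.
have -> : F_rooted e v = #|[set t : N.-tuple {set V} | is_shelling e t && (v \in head set0 t)]|.
  by rewrite cardsE.
rewrite -cardsX; apply: subset_leq_card; apply/subsetP => x; case/imsetP => t sh ->.
have [S [-> g]] := fP t sh.
rewrite in_setX !inE val_insubd (szt _ _ g).
by case/and3P: g => -> -> ->.
Qed.

End Main.


Theorem lemma3p11 (V : finType) (e : rel V) (v : V) (l : nat) :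
  simple_graph e -> is_tree e -> 2 <= #|V| -> longest_desc e v l ->
  F e <= (\sum_(k < l) 'C(#|V| - 2, k)) * F_rooted e v /\
  F e <= 2 ^ (#|V| - 2) * F_rooted e v.
Proof.
move=> [esym eirr] [hcG acyc] n2 hl.
have hm := main esym eirr hcG acyc n2 hl.
split.
  by have := card_small 'I_(#|V| - 2) l; rewrite card_ord => <-.
apply: leq_trans hm _; rewrite leq_mul2r; apply/orP; right.
by have := card_small_le 'I_(#|V| - 2) l; rewrite card_ord.
Qed.
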